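(* In the two-type heterogeneous SIS model described in the context, with $x_i=\lambda_i\widetilde d_i$ for $i=1,2$: (1) if $x_1>1$ and $x_2>1$, then diffusion occurs from a small seed for every $\pi\in(0,1)$; (2) if $x_1\le 1$ and $x_2\le 1$, then diffusion does not occur from a small seed for any $\pi\in(0,1)$; (3) if $x_1>1$ and $x_2\le 1$ (or $x_2>1$ and $x_1\le1$), then there exists $\pi^*\in(0,1)$ such that diffusion occurs from a small seed for every $\pi\in(\pi^*,1)$.
   Context: There are two types of agents, $i\in\{1,2\}$. For each type $i$, $P_i$ is a probability distribution on the nonnegative integers (degree distribution), with mean $\langle d\rangle_i=\sum_d P_i(d)d>0$ and finite second moment $\langle d^2\rangle_i=\sum_dP_i(d)d^2$; let $\widetilde d_i=\langle d^2\rangle_i/\langle d\rangle_i$. Each meeting of a type-$i$ agent is with its own type with probability $\pi\in(0,1)$ and with the other type with probability $1-\pi$. In the SIS process a susceptible type-$i$ agent becomes infected at rate $\nu_i>0$ per infected agent met, infected type-$i$ agents recover at rate $\delta_i>0$, $\lambda_i=\nu_i/\delta_i$, and meetings are biased proportionally to degree. Let $x_i=\lambda_i\widetilde d_i$ and $$A=\begin{pmatrix}\pi x_1 & (1-\pi)x_2\\ (1-\pi)x_1 & \pi x_2\end{pmatrix}.$$ Diffusion occurs from a small seed means: for every $\varepsilon>0$ there exists $v\in\mathbb{R}^2$ with $0<v_i<\varepsilon$ and $(Av)_i>v_i$ for $i=1,2$. (The condition $x_i>1$ is the condition for diffusion within type $i$ when isolated, i.e. at $\pi=1$.) *)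

(* Defs.v *)
From Stdlib Require Import Reals.
From Coquelicot Require Import Coquelicot.
Open Scope R_scope.

Definition degree_distribution (P : nat -> R) : Prop :=
  (forall d, 0 <= P d) /\
  is_series P 1 /\
  ex_series (fun d => P d * INR d ^ 2) /\
  0 < Series (fun d => P d * INR d).

Definition mean_deg (P : nat -> R) : R := Series (fun d => P d * INR d).
Definition second_moment (P : nat -> R) : R := Series (fun d => P d * INR d ^ 2).
Definition dtilde (P : nat -> R) : R := second_moment P / mean_deg P.

(* x_i = lambda_i * d~_i with lambda_i = nu_i / delta_i. *)
Definition xval (nu delta : R) (P : nat -> R) : R := (nu / delta) * dtilde P.

(* (A v)_i for A = [[pi x1, (1-pi) x2]; [(1-pi) x1, pi x2]]. *)
Definition Av1 (pi x1 x2 v1 v2 : R) : R := pi * x1 * v1 + (1 - pi) * x2 * v2.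
Definition Av2 (pi x1 x2 v1 v2 : R) : R := (1 - pi) * x1 * v1 + pi * x2 * v2.

Definition diffusion_small_seed (pi x1 x2 : R) : Prop :=
  forall eps, 0 < eps ->
    exists v1 v2, 0 < v1 < eps /\ 0 < v2 < eps /\
      Av1 pi x1 x2 v1 v2 > v1 /\ Av2 pi x1 x2 v1 v2 > v2.

(* Main.v *)
Require Import Defs.
From Stdlib Require Import Reals.
From Coquelicot Require Import Coquelicot.
From Stdlib Require Import Lra Psatz.
Open Scope R_scope.

Lemma core (pi a b : R) : 0 < pi < 1 -> 0 < a -> 1 < pi * a ->
  forall eps, 0 < eps -> exists v1 v2, 0 < v1 < eps /\ 0 < v2 < eps /\
      Av1 pi a b v1 v2 > v1 /\ Av2 pi a b v1 v2 > v2.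
Proof.
  intros Hp Ha Hpa eps He.
  set (c := Rmin ((1-pi)*a) (pi*a-1)).
  assert (Hc1 : c <= (1-pi)*a) by apply Rmin_l.
  assert (Hc2 : c <= pi*a-1) by apply Rmin_r.
  assert (Hc : 0 < c) by (apply Rmin_pos; nra).
  set (B := 1 + Rabs b).
  assert (HB : 1 <= B) by (unfold B; pose proof (Rabs_pos b); lra).
  assert (Hb1 : b <= Rabs b) by apply Rle_abs.
  assert (Hb2 : - b <= Rabs b) by (rewrite <- Rabs_Ropp; apply Rle_abs).
  set (t := c / (2*B + c)).
  assert (Hden : 0 < 2*B + c) by lra.
  assert (Ht : t * (2*B + c) = c) by (unfold t; field; lra).
  assert (Ht0 : 0 < t) by (unfold t; apply Rdiv_lt_0_compat; lra).
  assert (Ht1 : t < 1) by nra.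
  assert (HtB : t * B < c) by nra.
  exists (eps/2), (t*(eps/2)).
  unfold Av1, Av2.
  assert (Hw : 0 < eps/2) by lra.
  assert (H1 : (1-pi)*b*t >= - (t*B)).
  { assert (Hq : (1-pi)*b >= - B).
    { unfold B. assert (0 < 1-pi) by lra. pose proof (Rabs_pos b). nra. }
    assert (Hq2 : ((1-pi)*b + B) * t >= 0) by (apply Rle_ge, Rmult_le_pos; lra).
    lra. }
  assert (Hk : pi*a - 1 + (1-pi)*b*t > 0) by lra.
  assert (Hm : (pi*a - 1 + (1-pi)*b*t) * (eps/2) > 0) by (apply Rmult_gt_0_compat; lra).
  assert (H2 : t - pi*b*t <= t*B).
  { assert (Hq : 1 - pi*b <= B).
    { unfold B. pose proof (Rabs_pos b). nra. }
    assert (Hq2 : (B - (1 - pi*b)) * t >= 0) by (apply Rle_ge, Rmult_le_pos; lra).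
    lra. }
  assert (Hk2 : (1-pi)*a - t + pi*b*t > 0) by lra.
  assert (Hm2 : ((1-pi)*a - t + pi*b*t) * (eps/2) > 0) by (apply Rmult_gt_0_compat; lra).
  assert (Ht2 : t * (eps/2) < eps/2) by (rewrite <- (Rmult_1_l (eps/2)) at 2; apply Rmult_lt_compat_r; lra).
  assert (Ht3 : 0 < t * (eps/2)) by (apply Rmult_lt_0_compat; lra).
  repeat split; lra.
Qed.

Theorem corollary1 (P1 P2 : nat -> R) (nu1 nu2 delta1 delta2 : R)
  (hP1 : degree_distribution P1) (hP2 : degree_distribution P2)
  (hnu1 : 0 < nu1) (hnu2 : 0 < nu2) (hd1 : 0 < delta1) (hd2 : 0 < delta2) :
  let x1 := xval nu1 delta1 P1 in
  let x2 := xval nu2 delta2 P2 in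
  ((1 < x1 /\ 1 < x2) ->
     forall pi, 0 < pi < 1 -> diffusion_small_seed pi x1 x2) /\
  ((x1 <= 1 /\ x2 <= 1) ->
     forall pi, 0 < pi < 1 -> ~ diffusion_small_seed pi x1 x2) /\
  (((1 < x1 /\ x2 <= 1) \/ (1 < x2 /\ x1 <= 1)) ->
     exists pistar, 0 < pistar < 1 /\
       forall pi, pistar < pi < 1 -> diffusion_small_seed pi x1 x2).
Proof.
  intros x1 x2. clearbody x1 x2.
  assert (Hsym : forall pi, 0 < pi < 1 -> forall a b, 1 < a -> b <= 1 ->
     exists pistar, 0 < pistar < 1 /\ forall p, pistar < p < 1 ->
       forall eps, 0 < eps -> exists v1 v2, 0 < v1 < eps /\ 0 < v2 < eps /\
         Av1 p a b v1 v2 > v1 /\ Av2 p a b v1 v2 > v2).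
  { intros _ _ a b Ha Hb.
    exists ((1 + /a)/2).
    assert (Hia : 0 < /a < 1).
    { split. apply Rinv_0_lt_compat; lra.
      rewrite <- Rinv_1. apply Rinv_lt_contravar; lra. }
    split; [lra|].
    intros p Hp. apply core; try lra.
    assert (Hpa : /a < p) by lra.
    apply (Rmult_lt_compat_r a) in Hpa; [|lra].
    rewrite Rinv_l in Hpa; lra. }
  split; [|split].
  - intros [H1 H2] pi Hpi eps He.
    exists (eps/2), (eps/2). unfold Av1, Av2.
    assert (Hq1 : 0 < pi*(x1-1)) by (apply Rmult_lt_0_compat; lra).
    assert (Hq2 : 0 < (1-pi)*(x2-1)) by (apply Rmult_lt_0_compat; lra).
    assert (Hq : 0 < pi*(x1-1) + (1-pi)*(x2-1)) by lra.
    assert (Hm : (pi*(x1-1) + (1-pi)*(x2-1)) * (eps/2) > 0) by (apply Rmult_gt_0_compat; lra).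
    assert (E1 : pi*x1*(eps/2) + (1-pi)*x2*(eps/2) - eps/2 = (pi*(x1-1) + (1-pi)*(x2-1)) * (eps/2)) by ring.
    assert (E2 : (1-pi)*x1*(eps/2) + pi*x2*(eps/2) - eps/2 = ((1-pi)*(x1-1) + pi*(x2-1)) * (eps/2)) by ring.
    assert (Hm2 : ((1-pi)*(x1-1) + pi*(x2-1)) * (eps/2) > 0).
    { apply Rmult_gt_0_compat; [|lra].
      assert (0 < (1-pi)*(x1-1)) by (apply Rmult_lt_0_compat; lra).
      assert (0 < pi*(x2-1)) by (apply Rmult_lt_0_compat; lra). lra. }
    split; [split; lra|]. split; [split; lra|]. split; lra.
  - intros [H1 H2] pi Hpi Hd.
    destruct (Hd 1 ltac:(lra)) as [v1 [v2 [Hv1 [Hv2 [Ha1 Ha2]]]]].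
    unfold Av1, Av2 in *.
    assert (Q1 : (1-x1)*v1 >= 0) by (apply Rle_ge, Rmult_le_pos; lra).
    assert (Q2 : (1-x2)*v2 >= 0) by (apply Rle_ge, Rmult_le_pos; lra).
    lra.
  - intros [[H1 H2]|[H1 H2]].
    + destruct (Hsym (1/2) ltac:(lra) x1 x2 H1 H2) as [ps [Hps Hall]].
      exists ps. split; [exact Hps|]. intros p Hp. unfold diffusion_small_seed. apply Hall; auto.
    + destruct (Hsym (1/2) ltac:(lra) x2 x1 H1 H2) as [ps [Hps Hall]].
      exists ps. split; [exact Hps|]. intros p Hp. unfold diffusion_small_seed. intros eps He.
      destruct (Hall p Hp eps He) as [v2 [v1 [A [B [C D]]]]].
      exists v1, v2. unfold Av1, Av2 in *. repeat split; try lra.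
Qed.
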